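(* Let $P$ be an admissible Hilbert polynomial and $n>\deg P$ a positive integer. Then $\lambda(L^P_n)=L^{\lambda(P)}_{n+1}$. Moreover, $\lambda(L(a_0,a_1,\dots,a_{n-1}))=L(0,a_0,a_1,\dots,a_{n-1})$ for all $a_0,\dots,a_{n-1}\in\mathbb{N}$; in particular extension preserves codimension, i.e. $(n+1)-\deg\lambda(P)=n-\deg P$.
   Context: $\Bbbk$ is an algebraically closed field. For an ideal $I\subseteq\Bbbk[x_0,\dots,x_n]$, its extension is $\lambda(I):=I\cdot\Bbbk[x_0,\dots,x_{n+1}]$. For $a_0,\dots,a_{n-1}\in\mathbb{N}$, $L(a_0,\dots,a_{n-1})\subseteq\Bbbk[x_0,\dots,x_n]$ is the monomial ideal generated by $x_0^{a_{n-1}+1},\ x_0^{a_{n-1}}x_1^{a_{n-2}+1},\ \dots,\ x_0^{a_{n-1}}x_1^{a_{n-2}}\cdots x_{n-3}^{a_2}x_{n-2}^{a_1+1},\ x_0^{a_{n-1}}x_1^{a_{n-2}}\cdots x_{n-2}^{a_1}x_{n-1}^{a_0}$. Binomial coefficients are polynomials: $\binom{t+a}{b}=\frac{(t+a)\cdots(t+a-b+1)}{b!}$ for $b\ge 0$, $0$ for $b<0$. An admissible Hilbert polynomial is the Hilbert polynomial of a nonempty closed subscheme of some projective space; it has a unique Gotzmann expression $P(t)=\sum_{j=1}^r\binom{t+b_j-(j-1)}{b_j}$ with $b_1\ge\dots\ge b_r\ge0$; $\lambda(P)$ denotes the admissible polynomial with Gotzmann expression $\sum_{j=1}^r\binom{t+b_j+1-(j-1)}{b_j+1}$.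 Lexicographic order: $x^u>x^v$ if the first nonzero coordinate of $u-v$ is positive. For a homogeneous ideal $I$ with Hilbert function $H$, $L^H_n$ is the monomial ideal whose degree-$i$ piece is spanned by the $\dim_\Bbbk I_i$ lex-largest degree-$i$ monomials; for admissible $P$ with $\deg P<n$, $L^P_n$ is the saturation of $L^{H_I}_n$ with respect to $\langle x_0,\dots,x_n\rangle$ for any homogeneous $I$ with Hilbert polynomial $P$ (it depends only on $P,n$). The codimension of $L^P_n$ is $n-\deg P$. *)

(* Defs.v *)
From HB Require Import structures.
From mathcomp Require Import all_boot all_order all_algebra.
From mathcomp Require Import mpoly.

Set Implicit Arguments.
Unset Strict Implicit.
Unset Printing Implicit Defensive.

Import Order.TTheory GRing.Theory Num.Theory.
Local Open Scope ring_scope.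

Section Ideals.
Variable k : fieldType.
Variable m : nat.

Definition is_ideal (I : {mpoly k[m]} -> Prop) : Prop :=
  [/\ I 0, (forall f g, I f -> I g -> I (f + g)) & (forall f g, I g -> I (f * g))].

Definition hcomp (d : nat) (f : {mpoly k[m]}) : {mpoly k[m]} :=
  \sum_(u <- msupp f | mdeg u == d) f@_u *: 'X_[u].

(* f is homogeneous of degree d (0 is homogeneous of every degree) *)
Definition is_dhomog (d : nat) (f : {mpoly k[m]}) : Prop :=
  forall u, u \in msupp f -> mdeg u = d.

Definition is_homog_ideal (I : {mpoly k[m]} -> Prop) : Prop :=
  is_ideal I /\ (forall f d, I f -> I (hcomp d f)).

Definition deg_piece (I : {mpoly k[m]} -> Prop) (d : nat) (f : {mpoly k[m]}) : Prop :=
  I f /\ is_dhomog d f.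

Definition lin_indep (s : seq {mpoly k[m]}) : Prop :=
  forall c : seq k, size c = size s ->
    \sum_(i < size s) c`_i *: s`_i = 0 -> forall i, (i < size s)%N -> c`_i = 0.

Definition is_dim (V : {mpoly k[m]} -> Prop) (d : nat) : Prop :=
  (exists s : seq {mpoly k[m]}, [/\ size s = d, (forall f, f \in s -> V f) & lin_indep s])
  /\ (forall s : seq {mpoly k[m]}, (forall f, f \in s -> V f) -> lin_indep s -> (size s <= d)%N).

Definition nmon (d : nat) : nat := #|[set v : 'X_{1..m < d.+1} | mdeg v == d]|.

(* the Hilbert function of k[x]/I, given that h d = dim_k I_d for every d *)
Definition hilb_fun (h : nat -> nat) (d : nat) : nat := (nmon d - h d)%N.

Definition is_hilb_poly (h : nat -> nat) (P : {poly rat}) : Prop :=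
  exists d0, forall d, (d0 <= d)%N -> ((hilb_fun h d)%:R : rat) = P.[d%:R].

Definition lex_gt (u v : 'X_{1..m}) : bool :=
  [exists i : 'I_m, (v i < u i)%N && [forall j : 'I_m, (j < i)%N ==> (u j == v j)]].

Definition lex_top (h : nat -> nat) (u : 'X_{1..m}) : bool :=
  (#|[set v : 'X_{1..m < (mdeg u).+1} | (mdeg v == mdeg u) && lex_gt v u]| < h (mdeg u))%N.

(* L^H: the monomial ideal whose degree-d piece is spanned by the h(d)
   lex-largest monomials of degree d (h d = dim_k I_d) *)
Definition lex_ideal (h : nat -> nat) (f : {mpoly k[m]}) : Prop :=
  forall u, u \in msupp f -> lex_top h u.

(* power of the irrelevant ideal <x_0..x_(m-1)>^e: polys with all monomials of degree >= e *)
Definition irr_pow (e : nat) (g : {mpoly k[m]}) : Prop :=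
  forall u, u \in msupp g -> (e <= mdeg u)%N.

Definition saturation (J : {mpoly k[m]} -> Prop) (f : {mpoly k[m]}) : Prop :=
  exists e, forall g, irr_pow e g -> J (g * f).

Definition gen_ideal (gs : seq {mpoly k[m]}) (f : {mpoly k[m]}) : Prop :=
  exists c : seq {mpoly k[m]}, size c = size gs /\ f = \sum_(i < size gs) c`_i * gs`_i.

Definition same_ideal (I J : {mpoly k[m]} -> Prop) : Prop := forall f, I f <-> J f.

End Ideals.

Definition ext_ideal (k : fieldType) (m : nat) (I : {mpoly k[m]} -> Prop)
  (f : {mpoly k[m.+1]}) : Prop :=
  exists r (g : 'I_r -> {mpoly k[m.+1]}) (p : 'I_r -> {mpoly k[m]}),
    (forall j, I (p j)) /\ f = \sum_(j < r) g j * mwiden (p j).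

(* admissible Hilbert polynomial: Hilbert polynomial of a nonempty closed
   subscheme of some P^N over k, i.e. of k[x_0..x_N]/I for a homogeneous ideal I,
   nonemptiness being P <> 0 *)
Definition admissible (k : fieldType) (P : {poly rat}) : Prop :=
  P != 0 /\
  exists (N : nat) (I : {mpoly k[N.+1]} -> Prop) (h : nat -> nat),
    [/\ is_homog_ideal I, (forall d, is_dim (deg_piece I d) (h d)) & is_hilb_poly N.+1 h P].

(* binomial coefficient polynomial binom(t + a, b) *)
Definition binpoly (a : int) (b : nat) : {poly rat} :=
  (b`!%:R)^-1 *: \prod_(i < b) ('X + ((a - i%:Z)%:~R)%:P).

(* sum_{j=1}^r binom(t + b_j - (j-1), b_j), with b indexed from 0 *)
Definition gotzmann (r : nat) (b : nat -> nat) : {poly rat} :=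
  \sum_(j < r) binpoly ((b j)%:Z - j%:Z) (b j).

Definition gotz_seq (r : nat) (b : nat -> nat) : Prop :=
  forall i j, (i <= j)%N -> (j < r)%N -> (b j <= b i)%N.

(* lambda(P) computed from the Gotzmann expression (r, b) of P *)
Definition gotzmann_lambda (r : nat) (b : nat -> nat) : {poly rat} :=
  \sum_(j < r) binpoly ((b j)%:Z + 1 - j%:Z) (b j).+1.

(* generators of L(a_0, ..., a_(n-1)) in k[x_0..x_n] *)
Definition Lgen_exp (n : nat) (a : nat -> nat) (kk : nat) : 'X_{1..n.+1} :=
  [multinom (if (i < kk)%N then a (n.-1 - i)%N
             else if i == kk :> nat then (a (n.-1 - kk)%N + (kk < n.-1)%N)%N
             else 0%N) | i < n.+1].

Definition L_ideal (k : fieldType) (n : nat) (a : nat -> nat) : {mpoly k[n.+1]} -> Prop :=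
  gen_ideal [seq 'X_[Lgen_exp n a kk] | kk <- iota 0 n].

Definition shift0 (a : nat -> nat) (j : nat) : nat := if j is j'.+1 then a j' else 0%N.

(* Main.v *)
Require Import Defs.
From HB Require Import structures.
From mathcomp Require Import all_boot all_order all_algebra.
From mathcomp Require Import mpoly.
From mathcomp Require Import zify.
Import GRing.Theory.

Set Implicit Arguments.
Unset Strict Implicit.
Unset Printing Implicit Defensive.

Fixpoint lexlt (s t : seq nat) : bool :=
  match s, t with
  | x :: s', y :: t' => (x < y) || ((x == y) && lexlt s' t')
  | _, _ => false
  end.

Lemma lexlt_irr s : lexlt s s = false.
Proof. by elim: s => //= x s ->; rewrite ltnn eqxx. Qed.

Lemma lexlt_asym s t : lexlt s t -> ~~ lexlt t s.
Proof.
elim: s t => [|x s IH] [|y t] //=.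
case/orP => [xy|/andP[/eqP e h]].
  by rewrite ltnNge (ltnW xy) /= eq_sym (ltn_eqF xy).
by subst y; rewrite ltnn /= eqxx /=; apply: IH.
Qed.

Lemma lexlt_cat s1 s2 t1 t2 : size s1 = size t1 ->
  lexlt (s1 ++ s2) (t1 ++ t2) = lexlt s1 t1 || ((s1 == t1) && lexlt s2 t2).
Proof.
elim: s1 t1 => [|x s IH] [|y t] //= [/IH ->].
by rewrite eqseq_cons; case: ltngtP => //=; rewrite orbA.
Qed.

Lemma lexlt_split s t u : size s = size t -> size t = size u ->
  lexlt s u -> lexlt s t || lexlt t u.
Proof.
elim: s t u => [|x s IH] [|y t] [|z u] //= [e1] [e2] H.
case: (ltngtP x y) => [//|yx|exy] /=.
- have xz : x <= z by move: H; case/orP => [/ltnW //|/andP[/eqP -> _]].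
  by rewrite (leq_trans yx xz).
- subst y.
  move: H; case/orP => [->//|/andP[/eqP <- H]]; first by rewrite orbT.
  by rewrite ltnn eqxx /=; apply: IH.
Qed.

Lemma lexlt_zeros s t : all (fun x => x == 0) t -> lexlt s t = false.
Proof.
elim: s t => [|x s IH] [|y t] //= /andP[/eqP -> H].
by rewrite ltn0 IH // andbF.
Qed.

Lemma lexlt_le s t : size s = size t ->
  (forall i, nth 0 s i <= nth 0 t i) -> ~~ lexlt t s.
Proof.
elim: s t => [|x s IH] [|y t] //= [e] H.
have := H 0 => /= xy.
rewrite ltnNge xy /=; apply/negP => /andP[/eqP yx].
by apply/negP/IH => // i; have := H i.+1.
Qed.

Lemma lexlt_rcons0 s t x : size s = size t ->
  lexlt (rcons s x) (rcons t 0) = lexlt s t.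
Proof.
elim: s t => [|a s IH] [|b t] //=; first by move=> _; case: x.
by move=> [e]; rewrite IH.
Qed.

Lemma lexltE s t : lexlt s t ->
  exists i, [/\ i < size s, nth 0 s i < nth 0 t i &
     forall j, j < i -> nth 0 s j = nth 0 t j].
Proof.
elim: s t => [|x s IH] [|y t] //=.
case/orP => [xy|/andP[/eqP e /IH [i [i1 i2 i3]]]].
  by exists 0; split.
exists i.+1; split => // -[|j] //= /i3 //.
Qed.

Lemma lexltI s t i : size s = size t -> i < size s ->
  nth 0 s i < nth 0 t i -> (forall j, j < i -> nth 0 s j = nth 0 t j) ->
  lexlt s t.
Proof.
elim: s t i => [|x s IH] [|y t] [|i] //= [e] lti.
  by move=> H1 _; rewrite /= in H1; rewrite H1.
move=> H1 H2; have /= e0 := H2 0 isT; rewrite e0 eqxx ltnn /=.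
by apply: (IH t i) => // j ji; apply: (H2 j.+1).
Qed.

Fixpoint comps (N d : nat) : seq (seq nat) :=
  match N with
  | 0 => if d == 0 then [:: [::]] else [::]
  | N'.+1 => flatten [seq [seq c :: s | s <- comps N' (d - c)] | c <- iota 0 d.+1]
  end.

Lemma comps0 d : comps 0 d = if d == 0 then [:: [::]] else [::].
Proof. by []. Qed.
Lemma compsS N d : comps N.+1 d =
  flatten [seq [seq c :: s | s <- comps N (d - c)] | c <- iota 0 d.+1].
Proof. by []. Qed.
Arguments comps : simpl never.

Lemma mem_comps N d s : (s \in comps N d) = (size s == N) && (sumn s == d).
Proof.
elim: N d s => [|N IH] d s.
  rewrite comps0; case: s => [|x s] /=; case: d => //=; rewrite ?in_cons ?in_nil ?orbF //.
rewrite compsS; apply/flattenP/idP.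
- case=> l /mapP[c]; rewrite mem_iota add0n ltnS => /andP[_ cd] -> /mapP[s' hs' ->].
  move: hs'; rewrite IH /= => /andP[/eqP -> /eqP ->]; rewrite eqxx /=.
  by rewrite subnKC.
- case: s => [|x s] //; move=> /andP[/eqP [sz] /eqP sm]; rewrite /= in sm.
  exists [seq x :: s0 | s0 <- comps N (d - x)].
    by apply/mapP; exists x => //; rewrite mem_iota add0n ltnS -sm leq_addr.
  apply/mapP; exists s => //; rewrite IH sz eqxx -sm /=.
  by rewrite addKn.
Qed.

Lemma uniq_flat (l : seq nat) (L : nat -> seq (seq nat)) :
  uniq l -> (forall c, uniq (L c)) ->
  uniq (flatten [seq [seq c :: s | s <- L c] | c <- l]).
Proof.
move=> ul uL; elim: l ul => [|x l IH] //= /andP[xl ul].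
rewrite cat_uniq IH // andbT map_inj_uniq ?uL //=; last by move=> ? ? [].
apply/hasPn => y /flattenP[z /mapP[c cl ->] /mapP[s' _ ->]].
apply/negP => /mapP[s'' _ [ec _]].
by move: xl; rewrite -ec cl.
Qed.

Lemma uniq_comps N d : uniq (comps N d).
Proof.
elim: N d => [|N IH] d; first by rewrite comps0; case: d.
by rewrite compsS; apply: uniq_flat => //; apply: iota_uniq.
Qed.

Lemma count_compsS N d (Q : pred (seq nat)) :
  count Q (comps N.+1 d) = \sum_(c < d.+1) count (fun s => Q ((c : nat) :: s)) (comps N (d - c)).
Proof.
rewrite compsS count_flatten sumnE big_map big_map.
rewrite -(big_mkord xpredT (fun c => count (fun s => Q (c :: s)) (comps N (d - c)))).
rewrite /index_iota subn0; apply: eq_bigr => c _.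
by rewrite count_map.
Qed.

Lemma size_comps q D : size (comps q.+1 D) = 'C(D + q, q).
Proof.
elim: q D => [|q IH] D.
  rewrite -count_predT count_compsS big_ord_recr /= subnn comps0 /= bin0 big1 //.
  by move=> i _; rewrite comps0 subn_eq0 leqNgt ltn_ord.
rewrite -count_predT count_compsS.
under eq_bigr => c _ do rewrite count_predT IH.
elim: D => [|D IHD]; first by rewrite big_ord1 /= !add0n !binn.
rewrite big_ord_recl /= subn0 IHD.
by rewrite addSn -addnS addSn binS addnC.
Qed.

Lemma count_prefix (P : seq nat) N d : size P <= N -> sumn P <= d ->
  count (fun s => take (size P) s == P) (comps N d) =
  size (comps (N - size P) (d - sumn P)).
Proof.
elim: P N d => [|c P IH] N d.
  by move=> _ _; rewrite /= subn0 subn0 -(count_predT (comps N d)); apply: eq_count => s; rewrite take0.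
case: N => [|N] //= szP sP; rewrite subSS.
have cd : c < d.+1 by rewrite ltnS (leq_trans (leq_addr _ _) sP).
rewrite count_compsS (bigD1 (Ordinal cd)) //= big1 ?addn0.
  rewrite subnDA -IH //; last by rewrite leq_subRL ?(leq_trans (leq_addr _ _) sP).
  by apply: eq_count => s /=; rewrite eqseq_cons eqxx.
move=> i /eqP ic; rewrite -(count_pred0 (comps N (d - i))); apply: eq_count => s /=.
rewrite eqseq_cons; case: eqP => //= e; case: ic; apply: val_inj => /=; exact: e.
Qed.

Lemma lexlt_bump (t1 a1 t2 z : seq nat) y x :
  size t1 = size a1 -> all (fun v => v == 0) z ->
  lexlt (t1 ++ y :: t2) (a1 ++ x.+1 :: z) =
  lexlt (t1 ++ y :: t2) (a1 ++ x :: z) || ((t1 == a1) && (y == x)).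
Proof.
move=> e zz; rewrite !lexlt_cat //= !(lexlt_zeros _ zz) !andbF !orbF.
rewrite ltnS leq_eqVlt -orbA; congr (_ || _).
by case: (t1 == a1); rewrite //= orbC.
Qed.

Lemma lexlt_bump_disj (t1 a1 t2 z : seq nat) y x :
  size t1 = size a1 -> all (fun v => v == 0) z ->
  lexlt (t1 ++ y :: t2) (a1 ++ x :: z) && ((t1 == a1) && (y == x)) = false.
Proof.
move=> e zz; rewrite !lexlt_cat //= !(lexlt_zeros _ zz) !andbF !orbF.
case: eqP => [->|]; rewrite ?andbF //= lexlt_irr /=.
by case: eqP => [->|]; rewrite ?andbF ?andbT ?ltnn.
Qed.

Definition gseq (r : nat) (b : nat -> nat) : Prop :=
  forall i j, i <= j -> j < r -> b j <= b i.

Definition Aseq (p r : nat) (b : nat -> nat) : seq nat :=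
  [seq count (fun j => b j == p.-1 - i) (iota 0 r) | i <- iota 0 p].

Lemma size_Aseq p r b : size (Aseq p r b) = p.
Proof. by rewrite size_map size_iota. Qed.

Lemma nth_Aseq p r b i : i < p ->
  nth 0 (Aseq p r b) i = count (fun j => b j == p.-1 - i) (iota 0 r).
Proof. by move=> ip; rewrite (nth_map 0) ?size_iota // nth_iota. Qed.

Lemma nth_AseqS p r b i : i < p -> b r < p ->
  nth 0 (Aseq p r.+1 b) i = nth 0 (Aseq p r b) i + (i == p.-1 - b r).
Proof.
move=> ip brp; rewrite !nth_Aseq // -addn1 iotaD add0n count_cat /= addn0.
congr (_ + nat_of_bool _); apply/eqP/eqP; lia.
Qed.

Lemma nth_Aseq_zero p r b i : gseq r.+1 b -> b r < p -> p.-1 - b r < i -> i < p ->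
  nth 0 (Aseq p r b) i = 0.
Proof.
move=> g brp lt ip; rewrite nth_Aseq //; apply/eqP; rewrite -leqn0 leqNgt -has_count.
apply/hasPn => j; rewrite mem_iota add0n => /andP[_ jr].
have := g j r (ltnW jr) (ltnSn r); apply: contraL => /eqP ->; lia.
Qed.

Lemma sumn_Aseq p r b : (forall j, j < r -> b j < p) -> sumn (Aseq p r b) = r.
Proof.
elim: r => [|r IH] H.
  by rewrite /Aseq /=; elim: (iota 0 p) => //= x s ->.
have brp : b r < p by apply: H.
have -> : Aseq p r.+1 b = [seq nth 0 (Aseq p r b) i + (i == p.-1 - b r) | i <- iota 0 p].
  apply: (@eq_from_nth _ 0); rewrite ?size_map ?size_iota ?size_Aseq // => i ip.
  by rewrite nth_AseqS // (nth_map 0) ?size_iota // nth_iota.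
rewrite sumnE big_map big_split /=.
have -> : \sum_(i <- iota 0 p) nth 0 (Aseq p r b) i = sumn (Aseq p r b).
  by rewrite -{2}(mkseq_nth 0 (Aseq p r b)) /mkseq sumnE big_map size_Aseq.
rewrite IH; last by move=> j jr; apply: H; apply: ltnW.
have -> : forall (c : nat) (l : seq nat), \sum_(i <- l) (i == c : nat) = count_mem c l.
  by move=> c; elim => [|x l IHl]; rewrite ?big_nil ?big_cons //= IHl eq_sym.
rewrite count_uniq_mem ?iota_uniq // mem_iota add0n.
have -> : (p.-1 - b r < p) = true by apply/ltP; lia.
by rewrite addn1.
Qed.

Lemma bump_gen (t A : seq nat) c : c < size A -> size t = size A ->
  all (fun v => v == 0) (drop c.+1 A) ->
  (lexlt t (take c A ++ (nth 0 A c).+1 :: drop c.+1 A) = lexlt t A || (take c.+1 t == take c.+1 A))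
  /\ (lexlt t A && (take c.+1 t == take c.+1 A) = false).
Proof.
move=> cA tA zz.
have eA : A = take c A ++ nth 0 A c :: drop c.+1 A by rewrite -drop_nth // cat_take_drop.
have et : t = take c t ++ nth 0 t c :: drop c.+1 t by rewrite -drop_nth ?tA // cat_take_drop.
have sz : size (take c t) = size (take c A) by rewrite !size_takel ?tA // ltnW.
rewrite !(take_nth 0) ?tA // eqseq_rcons.
move: eA et sz zz; move: (take c A) (nth 0 A c) (drop c.+1 A) (take c t) (nth 0 t c) (drop c.+1 t).
move=> a1 x z t1 y t2 -> -> sz zz; split.
  by apply: lexlt_bump.
by apply: lexlt_bump_disj.
Qed.

Lemma count_T p r b : gseq r b -> (forall j, j < r -> b j < p) -> forall d, r <= d ->
  count (fun s => lexlt (take p s) (Aseq p r b)) (comps p.+1 d) =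
  \sum_(j < r) 'C(d - j + b j, b j).
Proof.
elim: r => [|r IH] g H d rd.
  rewrite big_ord0; apply/eqP; rewrite eqn0Ngt -has_count; apply/hasPn => s _ /=.
  by rewrite lexlt_zeros //; apply/allP => x /mapP[i _ ->].
have brp : b r < p by apply: H.
have g' : gseq r b by move=> i j ij jr; apply: g => //; apply: ltnW.
have H' : forall j, j < r -> b j < p by move=> j jr; apply: H; apply: ltnW.
set A := Aseq p r b; set c := p.-1 - b r.
have cE : c = p.-1 - b r by [].
clearbody c.
have cp : c < p by lia.
have szA : size A = p by rewrite size_Aseq.
have zz : all (fun v => v == 0) (drop c.+1 A).
  apply/(all_nthP 0) => i; rewrite size_drop => ip; rewrite nth_drop.
  by rewrite /A (nth_Aseq_zero g) //; lia.
have eA : A = take c A ++ nth 0 A c :: drop c.+1 A.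
  by rewrite -drop_nth ?szA // cat_take_drop.
have eA' : Aseq p r.+1 b = take c A ++ (nth 0 A c).+1 :: drop c.+1 A.
  apply: (@eq_from_nth _ 0).
    rewrite size_cat /= size_take size_drop szA size_Aseq cp; lia.
  move=> i; rewrite size_Aseq => ip; rewrite nth_AseqS // nth_cat size_take szA cp.
  case: (ltngtP i c) => ic.
  - by rewrite nth_take //= -cE (ltn_eqF ic) addn0.
  - rewrite -cE (gtn_eqF ic) addn0 (@nth_Aseq_zero p r b i g) //; last by lia.
    have -> : i - c = (i - c.+1).+1 by lia.
    by rewrite /= nth_drop (@nth_Aseq_zero p r b) //; lia.
  - by rewrite ic subnn /= -cE eqxx addn1.
rewrite big_ord_recr /= -IH //; last by apply: ltnW.
have sT : sumn (take c.+1 A) = r.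
  have := sumn_Aseq H'; rewrite -/A -{1}(cat_take_drop c.+1 A) sumn_cat.
  suff -> : sumn (drop c.+1 A) = 0 by rewrite addn0.
  by elim: (drop c.+1 A) zz => //= x l IHl /andP[/eqP -> /IHl ->].
have -> : 'C(d - r + b r, b r) = count (fun s => take c.+1 s == take c.+1 A) (comps p.+1 d).
  have {1}-> : c.+1 = size (take c.+1 A) by rewrite size_takel // szA.
  rewrite count_prefix ?size_takel ?szA ?sT //; try lia.
  have -> : p.+1 - c.+1 = (b r).+1 by lia.
  by rewrite size_comps.
rewrite -count_predUI.
have -> : count (predI (fun s => lexlt (take p s) A) (fun s => take c.+1 s == take c.+1 A)) (comps p.+1 d) = 0.
  apply/eqP; rewrite eqn0Ngt -has_count; apply/hasPn => s; rewrite mem_comps => /andP[/eqP ss _] /=.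
  have := @bump_gen (take p s) A c; rewrite szA size_takel ?ss // take_takel //.
  by case => // _ ->.
rewrite addn0; apply: eq_in_count => s; rewrite mem_comps => /andP[/eqP ss _] /=.
have := @bump_gen (take p s) A c; rewrite szA size_takel ?ss // take_takel // eA'.
by case => // -> _.
Qed.

Definition useq N (u : 'X_{1..N}) : seq nat := tval (multinom_val u).

Lemma size_useq N (u : 'X_{1..N}) : size (useq u) = N.
Proof. by rewrite /useq size_tuple. Qed.

Lemma nth_useq N (u : 'X_{1..N}) (i : 'I_N) : nth 0 (useq u) i = u i.
Proof. by rewrite (mnm_nth 0). Qed.

Lemma sumn_useq N (u : 'X_{1..N}) : sumn (useq u) = mdeg u.
Proof. by rewrite sumnE. Qed.

Lemma useq_inj N : injective (@useq N).
Proof. by move=> u v e; apply: val_inj; apply: val_inj. Qed.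

Lemma bridge N d (Q : pred (seq nat)) :
  #|[set v : 'X_{1..N < d.+1} | (mdeg v == d) && Q (useq v)]| = count Q (comps N d).
Proof.
rewrite cardsE cardE /enum_mem size_filter.
set f := fun v : 'X_{1..N < d.+1} => useq (bmnm v).
transitivity (count Q (map f (filter (fun v : 'X_{1..N < d.+1} => mdeg v == d) (Finite.enum _)))).
  rewrite count_map count_filter; apply: eq_count => v /=.
  by rewrite /f andbC.
apply/permP; apply: uniq_perm.
- rewrite map_inj_in_uniq ?filter_uniq -?enumT ?enum_uniq //.
  by move=> v w _ _ /useq_inj e; apply: val_inj.
- exact: uniq_comps.
move=> s; rewrite mem_comps; apply/mapP/idP.
- case=> v; rewrite mem_filter => /andP[/eqP dv _] ->.
  by rewrite /f size_useq sumn_useq dv !eqxx.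
- case/andP => /eqP sz /eqP sm.
  have sz' : size s == N by rewrite sz.
  pose v0 : 'X_{1..N} := Multinom (Tuple sz').
  have vd : mdeg v0 < d.+1 by rewrite -sumn_useq /useq /= sm.
  exists (BMultinom vd); last by [].
  by rewrite mem_filter -enumT mem_enum andbT /= -sumn_useq /useq /= sm.
Qed.

Definition Up (A : seq nat) N (u : 'X_{1..N}) : bool := ~~ lexlt (take (size A) (useq u)) A.

Lemma nth_useqn N (u : 'X_{1..N}) j (jN : j < N) : nth 0 (useq u) j = u (Ordinal jN).
Proof. exact: (nth_useq u (Ordinal jN)). Qed.

Lemma lex_gtE N (u v : 'X_{1..N}) : lex_gt u v = lexlt (useq v) (useq u).
Proof.
apply/existsP/idP.
- case=> i /andP[lt /forallP H].
  apply: (@lexltI _ _ i); rewrite ?size_useq ?nth_useq //.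
  move=> j ji; have jN : j < N by apply: ltn_trans ji (ltn_ord i).
  have := H (Ordinal jN); rewrite /= ji /= => /eqP e.
  by rewrite !nth_useqn e.
- case/lexltE => i []; rewrite size_useq => iN lt H.
  exists (Ordinal iN); rewrite -!nth_useqn lt /=.
  apply/forallP => j; apply/implyP => ji.
  by rewrite -!nth_useq H.
Qed.

Lemma lexlt_take k s t : size s = size t -> lexlt s t -> ~~ lexlt (take k t) (take k s).
Proof.
move=> e; rewrite -{1}(cat_take_drop k s) -{1}(cat_take_drop k t) lexlt_cat; last first.
  by rewrite !size_take e.
case/orP => [/lexlt_asym //|/andP[/eqP -> _]]; by rewrite lexlt_irr.
Qed.

Lemma Up_trans A N (u u' : 'X_{1..N}) : size A <= N ->
  ~~ lexlt (take (size A) (useq u')) (take (size A) (useq u)) -> Up A u -> Up A u'.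
Proof.
move=> AN H1 H2; apply/negP => H3.
have := @lexlt_split (take (size A) (useq u')) (take (size A) (useq u)) A.
rewrite !size_takel ?size_useq // => /(_ erefl erefl H3) /orP[].
  by rewrite (negbTE H1).
by apply/negP.
Qed.

Lemma Up_mono A N (u u' : 'X_{1..N}) : size A <= N ->
  (forall i, u i <= u' i) -> Up A u -> Up A u'.
Proof.
move=> AN H; apply: Up_trans => //; apply: lexlt_le.
  by rewrite !size_takel ?size_useq.
move=> i; case: (ltnP i (size A)) => iA; last first.
  by rewrite !nth_default ?size_takel ?size_useq.
have iN : i < N by apply: leq_trans iA AN.
by rewrite !nth_take // !nth_useqn.
Qed.

Lemma Up_lexgt A N (v v' : 'X_{1..N}) : size A <= N ->
  lex_gt v' v -> Up A v -> Up A v'.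
Proof.
move=> AN; rewrite lex_gtE => H; apply: Up_trans => //.
by apply: lexlt_take; rewrite ?size_useq.
Qed.

Lemma lexgt_Up A N (v v' : 'X_{1..N}) : size A <= N ->
  ~~ Up A v -> Up A v' -> lex_gt v' v.
Proof.
move=> AN; rewrite /Up negbK => H1 H2; rewrite lex_gtE.
have := @lexlt_split (take (size A) (useq v)) (take (size A) (useq v')) A.
rewrite !size_takel ?size_useq // => /(_ erefl erefl H1) /orP[H|]; last by rewrite (negbTE H2).
rewrite -(cat_take_drop (size A) (useq v)) -(cat_take_drop (size A) (useq v')).
by rewrite lexlt_cat ?H // !size_takel ?size_useq.
Qed.

Definition QA (A : seq nat) : pred (seq nat) := fun s => ~~ lexlt (take (size A) s) A.

Lemma lex_top_Up A N (h : nat -> nat) d1 : size A <= N ->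
  (forall d, d1 <= d -> nmon N d - h d = count (predC (QA A)) (comps N d)
                        /\ 0 < count (predC (QA A)) (comps N d)) ->
  forall v : 'X_{1..N}, d1 <= mdeg v -> lex_top h v = Up A v.
Proof.
move=> AN H v dv; have [H1 H2] := H _ dv.
set d := mdeg v in H1 H2 *.
have nmonE : nmon N d = size (comps N d).
  rewrite /nmon -(count_predT (comps N d)) -bridge; apply: eq_card => w.
  by rewrite !inE andbT.
have hE : h d = count (QA A) (comps N d).
  move: H1 H2; rewrite nmonE -(count_predC (QA A)); lia.
set Tc := [set w : 'X_{1..N < d.+1} | (mdeg w == d) && Up A w].
have TcE : #|Tc| = h d by rewrite hE -bridge.
rewrite /lex_top -/d -TcE.
have vd : mdeg v < d.+1 by [].
set v0 : 'X_{1..N < d.+1} := BMultinom vd.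
case: (boolP (Up A v)) => Uv.
- apply: proper_card; apply/properP; split.
    apply/subsetP => w; rewrite !inE => /andP[-> gt] /=.
    exact: (Up_lexgt AN gt).
  exists v0; first by rewrite inE /= eqxx Uv.
  rewrite inE /= eqxx /= lex_gtE lexlt_irr //.
- apply/negbTE; rewrite -leqNgt; apply: subset_leq_card.
  apply/subsetP => w; rewrite !inE => /andP[-> Uw] /=.
  exact: (lexgt_Up AN Uv Uw).
Qed.

Definition U (k : fieldType) N (A : seq nat) (f : {mpoly k[N]}) : Prop :=
  forall u, u \in msupp f -> Up A u.

Lemma take_useq_eq N (u u' : 'X_{1..N}) k : k <= N ->
  (forall i : 'I_N, i < k -> u i = u' i) -> take k (useq u) = take k (useq u').
Proof.
move=> kN H; apply: (@eq_from_nth _ 0); first by rewrite !size_takel ?size_useq.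
move=> i; rewrite size_takel ?size_useq // => ik.
have iN : i < N by apply: leq_trans ik kN.
by rewrite !nth_take // !nth_useqn H.
Qed.

Lemma sat_U (k : fieldType) p (A : seq nat) (h : nat -> nat) d1 : size A <= p ->
  (forall v : 'X_{1..p.+1}, d1 <= mdeg v -> lex_top h v = Up A v) ->
  same_ideal (saturation (@lex_ideal k p.+1 h)) (@U k p.+1 A).
Proof.
move=> Ap H f; split.
- case=> e He u uf.
  pose E := maxn e d1.
  pose w : 'X_{1..p.+1} := [multinom (if i == ord_max then E else 0) | i < p.+1].
  have mw : mdeg w = E.
    rewrite mdegE big_ord_recr /= big1 ?add0n; first by rewrite mnmE eqxx.
    move=> i _; rewrite mnmE.
    by have -> : (widen_ord (leqnSn p) i == ord_max) = false by apply/negbTE; rewrite -val_eqE /= neq_ltn ltn_ord.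
  have ip : irr_pow e ('X_[w] : {mpoly k[p.+1]}).
    by move=> m; rewrite msuppX mem_seq1 => /eqP ->; rewrite mw leq_maxl.
  have := He _ ip (w + u)%MM.
  rewrite mcoeff_msupp mulrC mcoeffMX -mcoeff_msupp => /(_ uf).
  rewrite (H (w + u)%MM); last by rewrite mdegD mw (leq_trans (leq_maxr _ _) (leq_addr _ _)).
  rewrite /Up (@take_useq_eq _ _ u) //; first by apply: leq_trans Ap _.
  move=> i iA; rewrite mnmDE mnmE.
  have -> : (i == ord_max) = false.
    apply/negbTE; apply: contraTneq iA => ->; rewrite -leqNgt /=; exact: Ap.
  by [].
- move=> Uf; exists d1 => g Hg m /msuppM_le /allpairsP[[m1 m2] [/= m1g m2f ->]].
  rewrite H; last by rewrite mdegD (leq_trans (Hg _ m1g) (leq_addr _ _)).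
  apply: (@Up_mono _ _ m2); first by apply: (leq_trans Ap).
    by move=> i; rewrite mnmDE leq_addl.
  exact: Uf.
Qed.

Lemma Up_rcons A N (u : 'X_{1..N.+1}) : size A <= N -> Up (rcons A 0) u = Up A u.
Proof.
move=> AN; rewrite /Up size_rcons (take_nth 0) ?size_useq ?ltnS //.
by rewrite lexlt_rcons0 // size_takel // size_useq; apply: leqW.
Qed.

Lemma useq_widen N (v : 'X_{1..N}) : useq (mnmwiden v) = rcons (useq v) 0.
Proof. by []. Qed.

Lemma Up_widen A N (v : 'X_{1..N}) : size A <= N -> Up A (mnmwiden v) = Up A v.
Proof. by move=> AN; rewrite /Up useq_widen -cats1 takel_cat // size_useq. Qed.

Lemma msupp_mwiden (k : fieldType) N (q : {mpoly k[N]}) m :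
  m \in msupp (mwiden q) -> exists2 v, v \in msupp q & m = mnmwiden v.
Proof.
rewrite {1}(mpolyE q) raddf_sum /= => /msupp_sum_le /flattenP[l /mapP[v vq ->]].
rewrite mwidenZ mwidenX => /msuppZ_le; rewrite msuppX mem_seq1 => /eqP ->.
by exists v => //; rewrite filter_predT in vq.
Qed.

Lemma ext_U (k : fieldType) N (A : seq nat) : size A <= N ->
  same_ideal (ext_ideal (@U k N A)) (@U k N.+1 (rcons A 0)).
Proof.
move=> AN f; split.
- case=> r [g [p [Hp ->]]] m /msupp_sum_le /flattenP[l /mapP[j _ ->]].
  case/msuppM_le/allpairsP => [[m1 m2] [/= m1g m2p ->]].
  case: (msupp_mwiden m2p) => v vp ->.
  rewrite Up_rcons //; apply: (@Up_mono _ _ (mnmwiden v)); first exact: leqW.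
    by move=> i; rewrite mnmDE leq_addl.
  by rewrite Up_widen //; apply: (Hp j v vp).
- move=> Uf.
  pose spl1 (u : 'X_{1..N.+1}) : 'X_{1..N.+1} := [multinom (if i == ord_max then u i else 0) | i < N.+1].
  pose spl2 (u : 'X_{1..N.+1}) : 'X_{1..N} := [multinom u (widen_ord (leqnSn N) i) | i < N].
  have espl u : u = (spl1 u + mnmwiden (spl2 u))%MM.
    apply/mnmP => i; rewrite mnmDE mnmE.
    case: (unliftP ord_max i) => [j ->|->].
    - have -> : lift ord_max j = widen_ord (leqnSn N) j by apply: val_inj; rewrite /= /bump leqNgt ltn_ord.
      have -> : (widen_ord (leqnSn N) j == ord_max) = false.
        by apply/negbTE; rewrite -val_eqE /= neq_ltn ltn_ord.
      by rewrite add0n mnmwiden_widen mnmE.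
    - by rewrite eqxx mnmwiden_ordmax addn0.
  have Up2 u : u \in msupp f -> Up A (spl2 u).
    move=> uf; rewrite -(Up_widen _ AN) /Up.
    rewrite (@take_useq_eq _ _ u); first by have := Uf u uf; rewrite Up_rcons.
      by apply: leqW.
    move=> i iA; rewrite [in RHS](espl u) mnmDE mnmE.
    have iN : i < N by apply: leq_trans iA AN.
    have -> : (i == ord_max) = false by apply/negbTE; rewrite -val_eqE /= neq_ltn iN.
    by rewrite add0n.
  set s := msupp f.
  exists (size s), (fun j => (f@_(nth 0%MM s j) *: 'X_[spl1 (nth 0%MM s j)])%R),
         (fun j => 'X_[spl2 (nth 0%MM s j)]); split.
    move=> j m; rewrite msuppX mem_seq1 => /eqP ->; apply: Up2.
    by rewrite mem_nth.
  rewrite {1}(mpolyE f) -/s (big_nth 0%MM) big_mkord; apply: eq_bigr => j _.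
  by rewrite mwidenX -GRing.scalerAl -mpolyXD -espl.
Qed.

Definition Arev (a : nat -> nat) (n : nat) : seq nat := [seq a (n.-1 - i) | i <- iota 0 n].

Lemma size_Arev a n : size (Arev a n) = n.
Proof. by rewrite size_map size_iota. Qed.

Lemma nth_Arev a n i : i < n -> nth 0 (Arev a n) i = a (n.-1 - i).
Proof. by move=> ip; rewrite (nth_map 0) ?size_iota // nth_iota. Qed.

Lemma LgenE n a kk (i : 'I_n.+1) : Lgen_exp n a kk i =
  if (i < kk)%N then a (n.-1 - i) else if i == kk :> nat then a (n.-1 - kk) + (kk < n.-1) else 0.
Proof. by rewrite /Lgen_exp mnmE. Qed.

Lemma Up_Lgen a n kk : kk < n -> Up (Arev a n) (Lgen_exp n a kk).
Proof.
move=> kn; rewrite /Up size_Arev; apply/negP => /lexltE [i []].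
rewrite size_takel ?size_useq // => iN.
have iN1 : i < n.+1 by apply: ltnW.
rewrite nth_take // nth_useqn nth_Arev // LgenE /= => lt H.
case: (ltngtP i kk) => ik.
- by move: lt; rewrite ik ltnn.
- have kN1 : kk < n.+1 by apply: ltnW.
  have := H kk ik; rewrite nth_take // nth_useqn nth_Arev // LgenE /= ltnn eqxx.
  move=> e; have : (kk < n.-1) = false by lia.
  move=> e2; move: lt; rewrite ltnNge; lia.
- by move: lt; rewrite ik ltnn eqxx; lia.
Qed.

Definition kf (a : nat -> nat) n (u : 'X_{1..n.+1}) : nat :=
  minn (find (fun i => nth 0 (take n (useq u)) i != nth 0 (Arev a n) i) (iota 0 n)) n.-1.

Lemma kf_lt a n (u : 'X_{1..n.+1}) : 0 < n -> kf a u < n.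
Proof. by move=> n0; rewrite /kf; apply: leq_ltn_trans (geq_minr _ _) _; lia. Qed.

Lemma Lgen_le a n (u : 'X_{1..n.+1}) : 0 < n -> Up (Arev a n) u ->
  (Lgen_exp n a (kf a u) <= u)%MM.
Proof.
move=> n0 Uu; apply/forallP => j; rewrite LgenE.
set t := take n (useq u).
have tj : forall i, i < n -> nth 0 t i = u (inord i).
  move=> i ilt; have iN1 : i < n.+1 by lia.
  rewrite nth_take // (nth_useqn u iN1).
  by congr (u _); apply: val_inj; rewrite /= inordK.
set P := fun i => nth 0 t i != nth 0 (Arev a n) i.
have bef : forall i, i < find P (iota 0 n) -> i < n -> u (inord i) = a (n.-1 - i).
  move=> i ilt iN; have := before_find 0 ilt; rewrite nth_iota // /P add0n => /negbFE /eqP.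
  by rewrite tj // nth_Arev.
have uj : u j = u (inord j) by congr (u _); apply: val_inj; rewrite /= inordK.
case: (ltnP (find P (iota 0 n)) n) => fn.
- have kE : kf a u = find P (iota 0 n) by rewrite /kf -/t -/P; apply/minn_idPl; lia.
  rewrite kE; set f0 := find P (iota 0 n) in fn kE bef *.
  have hP : has P (iota 0 n) by rewrite has_find size_iota.
  have Pf : P f0 by have := nth_find 0 hP; rewrite nth_iota // add0n.
  have gt : a (n.-1 - f0) < u (inord f0).
    rewrite ltnNge; apply/negP => le; move/negP: Uu; apply.
    rewrite size_Arev; apply: (@lexltI _ _ f0).
    - by rewrite size_takel ?size_Arev ?size_useq.
    - by rewrite size_takel ?size_useq.
    - move: Pf; rewrite /P -/t tj // nth_Arev // => ne; lia.
    - by move=> i ilt; rewrite -/t tj ?nth_Arev ?bef //; lia.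
  case: (ltngtP j f0) => jf.
  + by rewrite uj bef //; lia.
  + by [].
  + rewrite uj; have -> : inord j = inord f0 :> 'I_n.+1 by rewrite jf.
    by case: (f0 < n.-1) => /=; lia.
- have kE : kf a u = n.-1 by rewrite /kf -/t -/P; apply/minn_idPr; lia.
  rewrite kE.
  have fE : forall i, i < n -> u (inord i) = a (n.-1 - i) by move=> i iN; apply: bef => //; lia.
  have -> : (n.-1 < n.-1) = false by rewrite ltnn.
  case: (ltngtP j n.-1) => jf.
  + by rewrite uj fE //; lia.
  + by [].
  + rewrite addn0 uj; have -> : inord j = inord n.-1 :> 'I_n.+1 by rewrite jf.
    by rewrite fE; lia.
Qed.

Lemma L_U (k : fieldType) n a : 0 < n ->
  same_ideal (@L_ideal k n a) (@U k n.+1 (Arev a n)).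
Proof.
move=> n0 f; split.
- case=> c [sc ->] m /msupp_sum_le /flattenP[l /mapP[j _ ->]].
  case/msuppM_le/allpairsP => [[m1 m2] [/= m1g m2p ->]].
  have jn : (j : nat) < n by apply: (leq_trans (ltn_ord j)); rewrite size_map size_iota.
  move: m2p; rewrite (nth_map 0%N) ?size_iota //.
  rewrite nth_iota ?add0n // msuppX mem_seq1 => /eqP ->.
  apply: (@Up_mono _ _ (Lgen_exp n a j)); first by rewrite size_Arev.
    by move=> i; rewrite mnmDE leq_addl.
  exact: Up_Lgen.
- move=> Uf.
  set gs := [seq 'X_[Lgen_exp n a kk] | kk <- iota 0 n] : seq {mpoly k[n.+1]}.
  pose cf (i : nat) : {mpoly k[n.+1]} :=
    (\sum_(u <- msupp f | kf a u == i) (f@_u *: 'X_[u - Lgen_exp n a i]))%R.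
  exists [seq cf i | i <- iota 0 n]; split; first by rewrite !size_map.
  rewrite size_map size_iota.
  transitivity (\sum_(i < n) cf i * 'X_[Lgen_exp n a i])%R; last first.
    apply: eq_bigr => i _; rewrite (nth_map 0%N) ?size_iota // nth_iota // add0n.
    by rewrite /gs (nth_map 0%N) ?size_iota // nth_iota.
  rewrite {1}(mpolyE f).
  rewrite /cf.
  rewrite (eq_bigr (fun i : 'I_n => \sum_(u <- msupp f | kf a u == i) (f@_u *: 'X_[(u - Lgen_exp n a i)]) * 'X_[(Lgen_exp n a i)]))%R; last first.
    by move=> i _; rewrite GRing.mulr_suml.
  rewrite (exchange_big_dep xpredT) //=.
  apply: eq_big_seq => u uf.
  have ku := kf_lt a u n0.
  rewrite (big_pred1 (Ordinal ku)); last by move=> i; rewrite /= eq_sym -val_eqE.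
  rewrite /= -GRing.scalerAl -mpolyXD submK //.
  by apply: Lgen_le => //; apply: Uf.
Qed.

Module PolyFacts.
Import Order.TTheory Num.Theory.
Local Open Scope ring_scope.

Lemma binpoly_prodE (a : int) (b : nat) :
  \prod_(i < b) ('X + ((a - i%:Z)%:~R)%:P) = \prod_(i < b) ('X - (- ((a - i%:Z)%:~R : rat))%:P) :> {poly rat}.
Proof. by apply: eq_bigr => i _; rewrite polyCN opprK. Qed.

Lemma size_binpoly a b : size (binpoly a b) = b.+1.
Proof.
rewrite /binpoly size_scale; last by rewrite invr_eq0 pnatr_eq0 -lt0n fact_gt0.
by rewrite binpoly_prodE size_prod_XsubC -[index_enum _]enumT size_enum_ord.
Qed.

Lemma lead_binpoly a b : lead_coef (binpoly a b) = (b`!%:R)^-1.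
Proof. by rewrite /binpoly lead_coefZ binpoly_prodE lead_coef_prod_XsubC mulr1. Qed.

Lemma binpoly_eval (d j bj : nat) : (j <= d)%N ->
  (binpoly (bj%:Z - j%:Z) bj).[d%:R] = ('C(d - j + bj, bj))%:R.
Proof.
move=> jd; rewrite /binpoly hornerZ horner_prod.
have -> : \prod_(i < bj) ('X + (((bj%:Z - j%:Z) - i%:Z)%:~R)%:P).[(d%:R : rat)]
        = \prod_(i < bj) (((d - j + bj - i)%N)%:R : rat).
  apply: eq_bigr => i _; rewrite hornerD hornerX hornerC.
  have -> : (d%:R : rat) = (d%:Z)%:~R by [].
  rewrite -intrD.
  have -> : (((d - j + bj - i)%N)%:R : rat) = (((d - j + bj - i)%N)%:Z)%:~R by [].
  congr (_%:~R); have := ltn_ord i; lia.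
rewrite -natr_prod -ffact_prod -bin_ffact natrM mulrC -mulrA mulfV ?mulr1 //.
by rewrite pnatr_eq0 -lt0n fact_gt0.
Qed.

Lemma gotzmann_eval r b (d : nat) : (r <= d)%N ->
  (gotzmann r b).[d%:R] = (\sum_(j < r) 'C(d - j + b j, b j))%N%:R.
Proof.
move=> rd; rewrite /gotzmann horner_sum natr_sum; apply: eq_bigr => j _.
by rewrite binpoly_eval // ltnW // (leq_trans (ltn_ord j) rd).
Qed.

Lemma gotzmann_lambdaE r b : gotzmann_lambda r b = gotzmann r (fun j => (b j).+1).
Proof.
by apply: eq_bigr => j _; congr (binpoly _ _); rewrite -addn1 PoszD.
Qed.

Lemma gotzmann0 b : gotzmann 0 b = 0.
Proof. by rewrite /gotzmann big_ord0. Qed.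

Lemma size_gotzmann r b : (0 < r)%N -> gotz_seq r b -> size (gotzmann r b) = (b 0%N).+1.
Proof.
move=> r0 g.
have bj : forall j : 'I_r, (b j <= b 0%N)%N by move=> j; apply: g.
apply/anti_leq/andP; split.
  rewrite /gotzmann; apply: (leq_trans (size_sum _ _ _)).
  by apply/bigmax_leqP => j _; rewrite size_binpoly ltnS.
have cj : forall j : 'I_r, (binpoly ((b j)%:Z - j%:Z) (b j))`_(b 0%N) =
    if b j == b 0%N then (b 0%N)`!%:R^-1 else 0.
  move=> j; case: eqP => e.
    by rewrite -e -(lead_binpoly ((b j)%:Z - j%:Z)) /lead_coef size_binpoly.
  rewrite nth_default // size_binpoly ltn_neqAle bj andbT; exact/eqP.
suff hc : (gotzmann r b)`_(b 0%N) != 0.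
  by rewrite ltnNge; apply: contra hc => le; rewrite nth_default.
rewrite /gotzmann coef_sum.
under eq_bigr => j _ do rewrite cj.
rewrite (bigD1 (Ordinal r0)) //= eqxx.
apply/lt0r_neq0; apply: (@lt_le_trans _ _ ((b 0%N)`!%:R^-1)).
  by rewrite invr_gt0 ltr0n fact_gt0.
rewrite lerDl sumr_ge0 // => j _; case: ifP => // _.
by rewrite invr_ge0 ler0n.
Qed.

End PolyFacts.
Import PolyFacts.

Lemma ext_congr (k : fieldType) N (I J : {mpoly k[N]} -> Prop) :
  same_ideal I J -> same_ideal (ext_ideal I) (ext_ideal J).
Proof.
move=> IJ f; split; case=> r [g [p [Hp ->]]]; exists r, g, p; split => // j.
  by apply/IJ.
by apply/IJ.
Qed.

Lemma same_trans (k : fieldType) N (I J K : {mpoly k[N]} -> Prop) :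
  same_ideal I J -> same_ideal J K -> same_ideal I K.
Proof. by move=> H1 H2 f; rewrite H1 H2. Qed.

Lemma same_sym (k : fieldType) N (I J : {mpoly k[N]} -> Prop) :
  same_ideal I J -> same_ideal J I.
Proof. by move=> H f; rewrite H. Qed.

Lemma U_eq (k : fieldType) N A B : A = B -> same_ideal (@U k N A) (@U k N B).
Proof. by move=> ->. Qed.

Lemma Arev_shift0 a n : Arev (shift0 a) n.+1 = rcons (Arev a n) 0.
Proof.
rewrite /Arev -addn1 iotaD add0n map_cat /= cats1 /=.
rewrite addn1 /= subnn; congr rcons.
apply/eq_in_map => i; rewrite mem_iota add0n => /= ilt.
by have -> : (n - i = (n.-1 - i).+1)%N by lia.
Qed.

Lemma Aseq_shift n r b : (0 < n)%N ->
  Aseq n.+1 r (fun j => (b j).+1) = rcons (Aseq n r b) 0.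
Proof.
move=> n0; rewrite /Aseq -addn1 iotaD add0n map_cat cats1 /=.
congr rcons.
  apply/eq_in_map => i; rewrite mem_iota add0n => /= ilt.
  by apply: eq_count => j /=; apply/idP/idP => /eqP H; apply/eqP; lia.
by apply/eqP; rewrite -leqn0 leqNgt -has_count; apply/hasPn => j _ /=; rewrite addn1 /= subnn.
Qed.

Lemma sat_gotz (k : fieldType) p (h : nat -> nat) r b :
  (0 < r)%N -> gotz_seq r b -> (forall j, j < r -> b j < p)%N ->
  is_hilb_poly p.+1 h (gotzmann r b) ->
  same_ideal (saturation (@lex_ideal k p.+1 h)) (@U k p.+1 (Aseq p r b)).
Proof.
move=> r0 g bp [d0 Hd0].
have sA : size (Aseq p r b) = p by rewrite size_Aseq.
apply: (@sat_U k p _ h (maxn d0 r)); first by rewrite sA.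
apply: lex_top_Up; first by rewrite sA.
move=> d; rewrite geq_max => /andP[dd0 rd].
have -> : count (predC (QA (Aseq p r b))) (comps p.+1 d) =
          count (fun s => lexlt (take p s) (Aseq p r b)) (comps p.+1 d).
  by apply: eq_count => s; rewrite /= /QA negbK sA.
rewrite count_T //; split.
  have := Hd0 d dd0; rewrite gotzmann_eval // => /eqP; rewrite Num.Theory.eqr_nat => /eqP.
  by rewrite /hilb_fun.
rewrite (bigD1 (Ordinal r0)) //= subn0 ltn_addr // bin_gt0 leq_addl //.
Qed.


Unset Implicit Arguments.
Local Open Scope ring_scope.


Theorem proposition3p7 (k : closedFieldType) (P : {poly rat}) (n : nat) :
  admissible k P -> (0 < n)%N -> ((size P).-1 < n)%N ->
  (forall (r : nat) (b : nat -> nat),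
     gotz_seq r b -> P = gotzmann r b ->
     (* lambda(L^P_n) = L^{lambda P}_{n+1} *)
     (forall (I : {mpoly k[n.+1]} -> Prop) (h : nat -> nat)
             (I' : {mpoly k[n.+2]} -> Prop) (h' : nat -> nat),
        is_homog_ideal I -> (forall d, is_dim (deg_piece I d) (h d)) ->
        is_hilb_poly n.+1 h P ->
        is_homog_ideal I' -> (forall d, is_dim (deg_piece I' d) (h' d)) ->
        is_hilb_poly n.+2 h' (gotzmann_lambda r b) ->
        same_ideal (ext_ideal (saturation (@lex_ideal k n.+1 h)))
                   (saturation (@lex_ideal k n.+2 h')))
     (* codimension is preserved: (n+1) - deg lambda(P) = n - deg P *)
     /\ (n.+1 - (size (gotzmann_lambda r b)).-1 = n - (size P).-1)%N)
  /\
  (* lambda(L(a_0,...,a_(n-1))) = L(0,a_0,...,a_(n-1)) *)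
  (forall a : nat -> nat,
     same_ideal (ext_ideal (@L_ideal k n a)) (@L_ideal k n.+1 (shift0 a))).
Proof.
move=> [P0 _] n0 degP; split.
- move=> r b g Pg.
  have r0 : (0 < r)%N.
    rewrite lt0n; apply/negP => /eqP r0; move: P0; rewrite Pg r0 gotzmann0 eqxx //.
  have sP : size P = (b 0%N).+1 by rewrite Pg size_gotzmann.
  have bn : forall j, (j < r)%N -> (b j < n)%N.
    move=> j jr; apply: (leq_ltn_trans (g 0%N j (leq0n j) jr)).
    by move: degP; rewrite sP.
  have g' : gotz_seq r (fun j => (b j).+1) by move=> i j ij jr; rewrite ltnS; apply: g.
  split.
  + move=> I h I' h' _ _ hP _ _ hP'.
    rewrite Pg in hP; rewrite gotzmann_lambdaE in hP'.
    have S1 := sat_gotz (k:=k) r0 g bn hP.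
    have S2 := sat_gotz (k:=k) r0 g' (fun j jr => bn j jr : ((b j).+1 < n.+1)%N) hP'.
    apply: (same_trans (ext_congr S1)).
    apply: (same_trans (ext_U (k:=k) _)); first by rewrite size_Aseq.
    apply: same_sym; apply: (same_trans S2).
    by apply: U_eq; rewrite Aseq_shift.
  + rewrite gotzmann_lambdaE size_gotzmann // sP /=.
    by rewrite subSS.
- move=> a.
  apply: (same_trans (ext_congr (L_U (k:=k) a n0))).
  apply: (same_trans (ext_U (k:=k) _)); first by rewrite size_Arev.
  apply: same_sym; apply: (same_trans (L_U (k:=k) (shift0 a) (ltn0Sn n))).
  by apply: U_eq; rewrite Arev_shift0.
Qed.
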